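(* For every $j\in\{0,\dots,r-3\}$ and $n\in\mathbb{Z}$: $\chi_j(n)\ne0\Rightarrow n^2\equiv m_0^2\pmod{4P}$. (In particular $4P$ divides $m^2-m_0^2$ for every $m$ in the support of $\chi$.)
   Context: $r\ge3$; $p_1,\dots,p_r$ positive pairwise coprime, $p_2,\dots,p_r$ odd, $P=p_1\cdots p_r$, $\hat p_j=P/p_j$, $E=\{\pm1\}^r$, $\mathcal{N}_*(\underline\varepsilon)=\sum_j\varepsilon_j\hat p_j$, $m_0=(r-2-\sum_j1/p_j)P\in\mathbb{Z}$. $\chi:\mathbb{Z}\to\mathbb{Z}$ vanishes off $\mathfrak{S}=rP+\mathcal{N}_*(E)+2P\mathbb{Z}$ and on $\mathfrak{S}$ equals $\frac{(\ell+1)\cdots(\ell+r-3)}{(r-3)!}\varepsilon_1\cdots\varepsilon_r$, where $\underline\varepsilon\in E$ is the unique element with $\mathcal{N}_*(\underline\varepsilon)\equiv m-rP\bmod2P$ and $\ell=(m-(r-2)P-\mathcal{N}_*(\underline\varepsilon))/(2P)$. $\chi_0,\dots,\chi_{r-3}$ are the unique $2P$-periodic functions with $\chi(m)=\sum_jm^j\chi_j(m)$. *)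

(* Defs.v *)
From HB Require Import structures.
From mathcomp Require Import all_boot all_order all_algebra.
Set Implicit Arguments. Unset Strict Implicit. Unset Printing Implicit Defensive.
Import Order.TTheory GRing.Theory Num.Theory.
Local Open Scope ring_scope.

(* Indices j = 1..r of the paper are represented by i : 'I_r (i = j - 1). *)

Definition Pprod (r : nat) (p : 'I_r -> nat) : nat := (\prod_(i < r) p i)%N.

Definition hatp (r : nat) (p : 'I_r -> nat) (j : 'I_r) : nat := (Pprod p %/ p j)%N.

(* E = {+-1}^r, encoded as boolean vectors: true = +1, false = -1 *)
Definition sgnb (b : bool) : int := if b then 1 else -1.

Definition Nstar (r : nat) (p : 'I_r -> nat) (e : {ffun 'I_r -> bool}) : int :=
  \sum_(j < r) sgnb (e j) * (hatp p j)%:Z.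

(* m_0 = (r - 2 - sum_j 1/p_j) P = (r-2) P - sum_j \hat p_j *)
Definition m0 (r : nat) (p : 'I_r -> nat) : int :=
  (r%:Z - 2) * (Pprod p)%:Z - \sum_(j < r) (hatp p j)%:Z.

Definition in_class (r : nat) (p : 'I_r -> nat) (m : int) (e : {ffun 'I_r -> bool}) : bool :=
  (Nstar p e == m - r%:Z * (Pprod p)%:Z %[mod (2 * Pprod p)%N%:Z])%Z.

(* chi : Z -> Z (values computed in rat; they are integers).
   m is in the support set rP + N_*(E) + 2PZ iff some eps is in_class;
   then eps is unique (paper), selected here by [pick]. *)
Definition chi (r : nat) (p : 'I_r -> nat) (m : int) : rat :=
  match [pick e | in_class p m e] with
  | Some e =>
      let l : rat := (m - (r%:Z - 2) * (Pprod p)%:Z - Nstar p e)%:~R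
                     / ((2 * Pprod p)%N%:R) in
      (\prod_(i < r - 3) (l + (i.+1)%:R)) / ((r - 3)`!)%:R
        * (\prod_(j < r) sgnb (e j))%:~R
  | None => 0
  end.

(* Main.v *)
Require Import Defs.
From HB Require Import structures.
From mathcomp Require Import all_boot all_order all_algebra ring.
Import Order.TTheory GRing.Theory Num.Theory.
Set Implicit Arguments. Unset Strict Implicit.
Local Open Scope ring_scope.

Lemma hatpE r (p : 'I_r -> nat) (hpos : forall i, (0 < p i)%N) i :
  hatp p i = (\prod_(j < r | j != i) p j)%N.
Proof. by rewrite /hatp /Pprod (bigD1 i) //= mulKn. Qed.

Lemma hatp_mul r (p : 'I_r -> nat) (hpos : forall i, (0 < p i)%N) i :
  (hatp p i * p i)%N = Pprod p.
Proof. by rewrite hatpE // /Pprod [in RHS](bigD1 i) //= mulnC. Qed.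

Lemma dvd_hatp r (p : 'I_r -> nat) (hpos : forall i, (0 < p i)%N) i k :
  i != k -> (p k %| hatp p i)%N.
Proof.
move=> ik; rewrite hatpE // (bigD1 k) /=; last by rewrite eq_sym.
exact: dvdn_mulr.
Qed.

Lemma dvd_cross r (p : 'I_r -> nat) (hpos : forall i, (0 < p i)%N) i k :
  i != k -> ((Pprod p)%:Z %| (hatp p i)%:Z * (hatp p k)%:Z)%Z.
Proof.
move=> ik; rewrite -PoszM dvdzE /=.
have [q ->] := dvdnP (dvd_hatp hpos ik).
by rewrite -mulnA [(p k * _)%N]mulnC hatp_mul // dvdn_mull.
Qed.

Lemma cross r (p : 'I_r -> nat) (hpos : forall i, (0 < p i)%N) (x y : 'I_r -> int) :
  ((Pprod p)%:Z %| (\sum_i x i * (hatp p i)%:Z) * (\sum_k y k * (hatp p k)%:Z)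
     - \sum_i x i * y i * (hatp p i)%:Z ^+ 2)%Z.
Proof.
rewrite big_distrl /= -sumrB rpred_sum // => i _.
rewrite big_distrr /= (bigD1 i) //= addrAC.
have -> : x i * (hatp p i)%:Z * (y i * (hatp p i)%:Z) - x i * y i * (hatp p i)%:Z ^+ 2 = 0.
  by rewrite expr2; ring.
rewrite add0r rpred_sum // => k ki.
have -> : x i * (hatp p i)%:Z * (y k * (hatp p k)%:Z) = (x i * y k) * ((hatp p i)%:Z * (hatp p k)%:Z) by ring.
apply: dvdz_mull; apply: dvd_cross => //; by rewrite eq_sym.
Qed.

Definition aa r (p : 'I_r -> nat) (e : {ffun 'I_r -> bool}) : int :=
  r%:Z * (Pprod p)%:Z + Nstar p e.

Lemma sq_class r (p : 'I_r -> nat) (hpos : forall i, (0 < p i)%N) e e' :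
  (((4 * Pprod p)%N)%:Z %| aa p e ^+ 2 - aa p e' ^+ 2)%Z.
Proof.
pose h i := (hatp p i)%:Z.
pose d i := if e i == e' i then 0 else sgnb (e i).
pose g i := if e i == e' i then sgnb (e i) else 0.
pose D := \sum_i d i * h i. pose A := \sum_i g i * h i.
have E1 : Nstar p e = D + A.
  rewrite /Nstar /D /A -big_split; apply: eq_bigr => i _ /=.
  by rewrite /d /g /h; case: (e i); case: (e' i) => /=; ring.
have E2 : Nstar p e' = A - D.
  rewrite /Nstar /D /A -sumrB; apply: eq_bigr => i _ /=.
  by rewrite /d /g /h; case: (e i); case: (e' i) => /=; ring.
have DA : ((Pprod p)%:Z %| D * A)%Z.
  have := cross hpos d g.
  have -> : \sum_i d i * g i * (hatp p i)%:Z ^+ 2 = 0.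
    by rewrite big1 // => i _; rewrite /d /g; case: (e i == e' i); ring.
  by rewrite subr0.
rewrite /aa E1 E2.
have -> : (r%:Z * (Pprod p)%:Z + (D + A)) ^+ 2 - (r%:Z * (Pprod p)%:Z + (A - D)) ^+ 2
   = 4 * (D * r%:Z * (Pprod p)%:Z + D * A) by ring.
rewrite PoszM; apply: dvdz_mul => //.
by rewrite rpredD // dvdz_mull.
Qed.

Lemma m0E r (p : 'I_r -> nat) :
  m0 p = aa p [ffun => false] - 2 * (Pprod p)%:Z.
Proof.
rewrite /m0 /aa /Nstar.
have -> : \sum_(j < r) sgnb ([ffun=> false] j) * (hatp p j)%:Z = - \sum_(j < r) (hatp p j)%:Z.
  by rewrite -sumrN; apply: eq_bigr => i _; rewrite ffunE /=; ring.
ring.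
Qed.

Lemma class_sq r (p : 'I_r -> nat) (hpos : forall i, (0 < p i)%N) n e :
  in_class p n e -> (n ^+ 2 == (m0 p) ^+ 2 %[mod (4 * Pprod p)%N%:Z])%Z.
Proof.
rewrite /in_class !eqz_mod_dvd => /dvdzP [t Ht].
have Hn : n = aa p e - t * (2 * Pprod p)%N%:Z.
  by rewrite /aa -Ht; ring.
have H1 := sq_class hpos e [ffun => false].
rewrite m0E Hn.
set a := aa p e in H1 *; set a0 := aa p [ffun => false] in H1 *.
have -> : (a - t * (2 * Pprod p)%N%:Z) ^+ 2 - (a0 - 2 * (Pprod p)%:Z) ^+ 2
  = (a ^+ 2 - a0 ^+ 2) + (4 * Pprod p)%N%:Z * (- t * a + t * t * (Pprod p)%:Z + a0 - (Pprod p)%:Z).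
  by rewrite !PoszM; ring.
by rewrite rpredD // dvdz_mulr.
Qed.

Lemma in_class_shift r (p : 'I_r -> nat) n (k : int) e :
  in_class p (n + (2 * Pprod p)%N%:Z * k) e = in_class p n e.
Proof.
rewrite /in_class !eqz_mod_dvd.
have -> : Nstar p e - (n + (2 * Pprod p)%N%:Z * k - r%:Z * (Pprod p)%:Z)
  = (Nstar p e - (n - r%:Z * (Pprod p)%:Z)) - (2 * Pprod p)%N%:Z * k by ring.
by rewrite rpredBr // dvdz_mulr.
Qed.

Lemma chi0 r (p : 'I_r -> nat) n : (forall e, ~~ in_class p n e) -> chi p n = 0.
Proof. by move=> H; rewrite /chi; case: pickP => // e He; have := H e; rewrite He. Qed.

Lemma inj_test (n : int) (c : nat) : (0 < c)%N ->
  injective (fun k : nat => ((n + c%:Z * k%:Z)%:~R : rat)).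
Proof.
move=> c0 k k' /= /intr_inj /addrI /eqP; rewrite -!PoszM eqz_nat eqn_pmul2l //.
by move/eqP.
Qed.

Theorem proposition4p8 (r : nat) (p : 'I_r -> nat)
  (hr : (3 <= r)%N)
  (hpos : forall i, (0 < p i)%N)
  (hcop : forall i j : 'I_r, i != j -> coprime (p i) (p j))
  (hodd : forall i : 'I_r, (0 < i)%N -> odd (p i))
  (chij : 'I_(r - 2) -> int -> rat)
  (hper : forall j n, chij j (n + (2 * Pprod p)%N%:Z) = chij j n)
  (hdec : forall m : int, chi p m = \sum_(j < r - 2) (m%:~R) ^+ j * chij j m) :
  forall (j : 'I_(r - 2)) (n : int), chij j n != 0 ->
    (n ^+ 2 == (m0 p) ^+ 2 %[mod (4 * Pprod p)%N%:Z])%Z.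
Proof.
move=> j n hj.
case: (pickP (in_class p n)) => [e He|Hno]; first exact: class_sq He.
exfalso; move/negP: hj; apply.
have P0 : (0 < 2 * Pprod p)%N.
  by rewrite muln_gt0 /= /Pprod prodn_gt0.
set c := (2 * Pprod p)%N.
have shift : forall (k : nat) j', chij j' (n + c%:Z * k%:Z) = chij j' n.
  elim=> [|k IH] j'; first by rewrite mulr0 addr0.
  by rewrite -[k.+1]addn1 PoszD mulrDr mulr1 addrA hper.
pose cf (i : nat) : rat := if (insub i : option 'I_(r - 2)) is Some j' then chij j' n else 0.
pose q : {poly rat} := \poly_(i < r - 2) cf i.
have cfv : forall j' : 'I_(r - 2), cf j' = chij j' n by move=> j'; rewrite /cf valK.
have roots : forall k : nat, q.[(n + c%:Z * k%:Z)%:~R] = 0.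
  move=> k; rewrite horner_poly.
  have := hdec (n + c%:Z * k%:Z).
  rewrite chi0; last by move=> e; rewrite in_class_shift Hno.
  move=> H; rewrite [RHS]H; apply: eq_bigr => j' _; rewrite cfv shift mulrC //.
have q0 : q = 0.
  apply/eqP; apply/negPn/negP => qn0.
  have := max_poly_roots qn0 (rs := [seq ((n + c%:Z * k%:Z)%:~R : rat) | k <- iota 0 (r - 2)]).
  rewrite size_map size_iota.
  have -> : all (root q) [seq ((n + c%:Z * k%:Z)%:~R : rat) | k <- iota 0 (r - 2)].
    by apply/allP => x /mapP [k _ ->]; apply/eqP; apply: roots.
  rewrite map_inj_uniq ?iota_uniq; last exact: inj_test.
  move=> /(_ isT isT) H; have := size_poly (r - 2) cf.
  by rewrite -/q leqNgt H.
have := congr1 (fun s : {poly rat} => s`_j) q0.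
by rewrite /= coef_poly ltn_ord cfv coef0 => ->.
Qed.
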